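(* Let $R$ be an associative ring with identity $1$ and an involution $*$, let $p,q\in R$ be projections, and put $\overline{p}=1-p$, $\overline{q}=1-q$. If $p\overline{q}$ and $\overline{p}q$ are both MP invertible, then $p-q$ is MP invertible and $$(p-q)^{\dagger}=\overline{q}(p\overline{q}p)^{\dagger}-q(\overline{p}q\overline{p})^{\dagger}.$$
   Context: An involution on $R$ is a map $a\mapsto a^*$ with $(a^* )^*=a$, $(a+b)^*=a^*+b^*$, $(ab)^*=b^*a^*$. An element $a$ is MP invertible if there is $b$ with $aba=a$, $bab=b$, $(ab)^*=ab$, $(ba)^*=ba$; this $b$ is unique and written $a^{\dagger}$. A projection is an element $p$ with $p^2=p=p^*$. (Under the hypothesis, $p\overline{q}p$ and $\overline{p}q\overline{p}$ are MP invertible, so the formula makes sense.) *)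

(* Defs.v *)
From mathcomp Require Import all_boot all_algebra.
Set Implicit Arguments. Unset Strict Implicit. Unset Printing Implicit Defensive.
Import GRing.Theory.
Local Open Scope ring_scope.

Definition involution (R : pzRingType) (star : R -> R) : Prop :=
  [/\ forall a, star (star a) = a,
      forall a b, star (a + b) = star a + star b &
      forall a b, star (a * b) = star b * star a].

Definition is_MP_inverse (R : pzRingType) (star : R -> R) (a b : R) : Prop :=
  [/\ a * b * a = a, b * a * b = b,
      star (a * b) = a * b & star (b * a) = b * a].

Definition MP_invertible (R : pzRingType) (star : R -> R) (a : R) : Prop :=
  exists b, is_MP_inverse star a b.

Definition projection (R : pzRingType) (star : R -> R) (p : R) : Prop :=
  p * p = p /\ star p = p.

(* Main.v *)
Require Import Defs.
From mathcomp Require Import all_boot all_algebra.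
Import GRing.Theory.
Local Open Scope ring_scope.

Section S.
Variables (R : pzRingType) (star : R -> R).
Hypothesis inv : involution star.

Lemma sK a : star (star a) = a. Proof. by case: inv. Qed.
Lemma sD a b : star (a + b) = star a + star b. Proof. by case: inv. Qed.
Lemma sM a b : star (a * b) = star b * star a. Proof. by case: inv. Qed.
Lemma s0 : star 0 = 0.
Proof. have := sD 0 0; rewrite addr0 => /eqP; rewrite -subr_eq subrr eq_sym => /eqP //. Qed.
Lemma sN a : star (- a) = - star a.
Proof. apply/eqP; rewrite -subr_eq0 opprK -sD addNr s0 //. Qed.
Lemma sB a b : star (a - b) = star a - star b. Proof. by rewrite sD sN. Qed.
Lemma s1 : star 1 = 1.
Proof. by have := sM (star 1) 1; rewrite !mulr1 !sK mulr1 => <-. Qed.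

Lemma MP_uniq a b c : is_MP_inverse star a b -> is_MP_inverse star a c -> b = c.
Proof.
move=> [h1 h2 h3 h4] [k1 k2 k3 k4].
have E1 : b = b * a * c.
  have e : star a = star a * (a * c) by rewrite -k3 -(sM (a*c) a) k1.
  rewrite -{1}h2 -mulrA -h3 (sM a b) e [star b * _]mulrA -(sM a b) h3 !mulrA h2 //.
have E2 : c = b * a * c.
  have e : star a = (b * a) * star a by rewrite -h4 -(sM a (b*a)) mulrA h1.
  rewrite -{1}k2 -k4 (sM c a) e -[b * a * star a * star c]mulrA -(sM c a) k4 !mulrA.
  by rewrite -!mulrA [c * (a * c)]mulrA k2.
by rewrite E1 -E2.
Qed.

Lemma MP_herm A x : star A = A -> is_MP_inverse star A x -> star x = x.
Proof.
move=> hA [h1 h2 h3 h4].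
have X : x * A = A * star x by rewrite -{1}h4 (sM x A) hA.
have Y : A * x = star x * A by rewrite -{1}h3 (sM A x) hA.
apply: (@MP_uniq A); last by split.
split.
- by have := congr1 star h1; rewrite (sM (A*x) A) (sM A x) hA mulrA.
- by have := congr1 star h2; rewrite (sM (x*A) x) (sM x A) hA mulrA.
- by rewrite (sM A) sK hA -X.
- by rewrite (sM _ A) sK hA -Y.
Qed.

Lemma MP_proj A x p : star A = A -> is_MP_inverse star A x ->
  p * A = A -> A * p = A -> p * x = x /\ x * p = x.
Proof.
move=> hA hx pA Ap; have hs := @MP_herm A x hA hx; case: hx => h1 h2 h3 h4.
have X : x * A = A * x by rewrite -{1}h4 (sM x A) hA hs.
split.
- by rewrite -h2 X -!mulrA [p * (A * _)]mulrA pA.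
- by rewrite -{1}h2 -(mulrA x A x) -X -!mulrA Ap X mulrA h2.
Qed.

Lemma MP_fact a c : is_MP_inverse star a c -> a = a * star a * star c.
Proof. by case=> h1 h2 h3 h4; rewrite -mulrA -(sM c a) h4 mulrA h1. Qed.

Lemma MP_aas a c : is_MP_inverse star a c -> is_MP_inverse star (a * star a) (star c * c).
Proof.
case=> h1 h2 h3 h4.
have E : c * a = star a * star c by rewrite -h4 sM.
have F : a * c = star c * star a by rewrite -h3 sM.
have G1 z : a * (c * (a * z)) = a * z by rewrite !mulrA h1.
have G2 z : c * (a * (c * z)) = c * z by rewrite !mulrA h2.
have E' z : star a * (star c * z) = c * (a * z) by rewrite !mulrA E.
have F' z : star c * (star a * z) = a * (c * z) by rewrite !mulrA F.
split.
- by rewrite -!mulrA E' G1.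
- by rewrite -!mulrA E' G2 [c * (a * c)]mulrA h2.
- by rewrite -!mulrA E' G1.
- have V : star c * (c * (a * star a)) = a * c.
    by rewrite [c * (a * _)]mulrA E -!mulrA F' -F G1.
  by rewrite -!mulrA V.
Qed.
End S.

Lemma main2 (R : pzRingType) (star : R -> R) (p q : R) :
  involution star -> projection star p -> projection star q ->
  MP_invertible star (p * (1 - q)) -> MP_invertible star ((1 - p) * q) ->
  forall x y : R,
    is_MP_inverse star (p * (1 - q) * p) x ->
    is_MP_inverse star ((1 - p) * q * (1 - p)) y ->
    is_MP_inverse star (p - q) ((1 - q) * x - q * y).
Proof.
move=> inv [pp sp] [qq sq] [c hc] [d hd] x y hx hy.
have sM := sM _ _ inv; have sB := sB _ _ inv; have s1 := s1 _ _ inv; have sD := sD _ _ inv.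
have snq : star (1 - q) = 1 - q by rewrite sB s1 sq.
have snp : star (1 - p) = 1 - p by rewrite sB s1 sp.
have nqq : (1 - q) * (1 - q) = 1 - q by rewrite !(mulrBl, mulrBr, mul1r, mulr1) qq subrr subr0.
have npp : (1 - p) * (1 - p) = 1 - p by rewrite !(mulrBl, mulrBr, mul1r, mulr1) pp subrr subr0.
have pnp : p * (1 - p) = 0 by rewrite mulrBr mulr1 pp subrr.
have npp0 : (1 - p) * p = 0 by rewrite mulrBl mul1r pp subrr.
have hA : star (p * (1 - q) * p) = p * (1 - q) * p by rewrite !sM sp snq mulrA.
have hB : star ((1 - p) * q * (1 - p)) = (1 - p) * q * (1 - p) by rewrite !sM sq snp mulrA.
have [px xp] : p * x = x /\ x * p = x.
  by apply: (MP_proj _ _ inv _ _ p hA hx); rewrite ?mulrA ?pp // -mulrA pp.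
have [py yp] : (1 - p) * y = y /\ y * (1 - p) = y.
  apply: (MP_proj _ _ inv _ _ (1 - p) hB hy); first by rewrite !mulrA npp.
  by rewrite -(mulrA _ (1 - p)) npp.
have xs := MP_herm _ _ inv _ _ hA hx; have ys := MP_herm _ _ inv _ _ hB hy.
have qnq : q * (1 - q) = 0 by rewrite mulrBr mulr1 qq subrr.
have fa := MP_fact _ _ inv _ _ hc.
have fb := MP_fact _ _ inv _ _ hd.
have aA : p * (1 - q) * star (p * (1 - q)) = p * (1 - q) * p.
  by rewrite sM snq sp mulrA -(mulrA p) nqq.
have bB : (1 - p) * q * star ((1 - p) * q) = (1 - p) * q * (1 - p).
  by rewrite sM snp sq mulrA -(mulrA (1 - p)) qq.
rewrite aA in fa; rewrite bB in fb.
case: (hx) => hx1 hx2 hx3 hx4; case: (hy) => hy1 hy2 hy3 hy4.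
have Axa : p * (1 - q) * p * x * (p * (1 - q)) = p * (1 - q).
  have := congr1 (fun t => t * star c) hx1; rewrite /= -mulrA -fa => ->; done.
have Byb : (1 - p) * q * (1 - p) * y * ((1 - p) * q) = (1 - p) * q.
  have := congr1 (fun t => t * star d) hy1; rewrite /= -mulrA -fb => ->; done.
have xB z : x * ((1 - p) * q * (1 - p) * z) = 0.
  by rewrite -xp -!mulrA [p * ((1 - p) * _)]mulrA pnp mul0r mulr0.
have yA z : y * (p * (1 - q) * p * z) = 0.
  by rewrite -yp -!mulrA [(1 - p) * (p * _)]mulrA npp0 mul0r mulr0.
have K1 : (p - q) * (1 - q) = p * (1 - q) by rewrite mulrBl qnq subr0.
have K2 : (p - q) * q = - ((1 - p) * q) by rewrite mulrBl qq mulrBl mul1r opprB.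
have K3 : p * (p - q) = p * (1 - q) by rewrite mulrBr pp mulrBr mulr1.
have K4 : (1 - p) * (p - q) = - ((1 - p) * q) by rewrite mulrBr npp0 sub0r.
have xK : x * (p - q) = x * (p * (1 - q)) by rewrite -{1}xp -mulrA K3.
have yK : y * (p - q) = - (y * ((1 - p) * q)) by rewrite -{1}yp -mulrA K4 mulrN.
set A := p * (1 - q) * p in hA hx hx1 hx2 hx3 hx4 Axa yA xs px xp.
set B := (1 - p) * q * (1 - p) in hB hy hy1 hy2 hy3 hy4 Byb xB ys py yp.
have D1 : (p - q) * ((1 - q) * x - q * y) = A * x + B * y.
  by rewrite mulrBr !mulrA K1 K2 mulNr opprK -{1}px -{1}py !mulrA.
have D2 : ((1 - q) * x - q * y) * (p - q) = (1 - q) * x * (1 - q) + q * y * q.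
  rewrite mulrBl -!mulrA xK yK mulrN opprK.
  by rewrite (mulrA x p) xp (mulrA y (1 - p)) yp.
split.
- rewrite D1 mulrDl -(mulrA _ x) -(mulrA _ y) xK yK mulrN (mulrA A) (mulrA B) Axa Byb.
  rewrite mulrBr mulr1 mulrBl mul1r opprB addrA subrK //.
- rewrite -mulrA D1 mulrBl !mulrDr -(mulrA (1 - q) x (A * x)) (mulrA x A x) hx2 -(mulrA (1 - q) x (B * y)) xB -(mulrA q y (A * x)) yA -(mulrA q y (B * y)) (mulrA y B y) hy2 !mulr0 addr0 add0r //.
- by rewrite D1 sD hx3 hy3.
- by rewrite D2 sD !sM snq sq xs ys !mulrA.
Qed.

Theorem lemma2p3 (R : pzRingType) (star : R -> R) (p q : R) :
  involution star -> projection star p -> projection star q ->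
  MP_invertible star (p * (1 - q)) -> MP_invertible star ((1 - p) * q) ->
  MP_invertible star (p - q) /\
  forall x y : R,
    is_MP_inverse star (p * (1 - q) * p) x ->
    is_MP_inverse star ((1 - p) * q * (1 - p)) y ->
    is_MP_inverse star (p - q) ((1 - q) * x - q * y).
Proof.
move=> inv hp hq ha hb.
have H := main2 _ _ _ _ inv hp hq ha hb.
split=> //.
case: (hp) => pp sp; case: (hq) => qq sq.
have snq : star (1 - q) = 1 - q by rewrite (sB _ _ inv) (s1 _ _ inv) sq.
have snp : star (1 - p) = 1 - p by rewrite (sB _ _ inv) (s1 _ _ inv) sp.
have nqq : (1 - q) * (1 - q) = 1 - q by rewrite !(mulrBl, mulrBr, mul1r, mulr1) qq subrr subr0.
have aA : p * (1 - q) * star (p * (1 - q)) = p * (1 - q) * p.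
  by rewrite (sM _ _ inv) snq sp mulrA -(mulrA p) nqq.
have bB : (1 - p) * q * star ((1 - p) * q) = (1 - p) * q * (1 - p).
  by rewrite (sM _ _ inv) snp sq mulrA -(mulrA (1 - p)) qq.
case: ha => c hc; case: hb => d hd.
have hx := MP_aas _ _ inv _ _ hc; rewrite aA in hx.
have hy := MP_aas _ _ inv _ _ hd; rewrite bB in hy.
by eexists; apply: H hx hy.
Qed.
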